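(* Every join-congruence uniform left modular lattice is join-extremal, and every meet-congruence uniform left modular lattice is meet-extremal. Moreover, a congruence uniform lattice is extremal if and only if it is left modular.
   Context: All lattices are finite. For a convex subset $C$ of a lattice $L$, let $I_L(C)=\{y\in L\mid\exists x\in C,\ y\le x\}$, and the doubling $L[C]$ is the subposet of $L\times\{0<1\}$ on $\big(I_L(C)\times\{0\}\big)\sqcup\big(((L\setminus I_L(C))\cup C)\times\{1\}\big)$. A lattice is join-congruence uniform (resp. meet-congruence uniform, congruence uniform) if it is obtained from the one-element lattice by successive doublings of nonempty lower pseudo-intervals (resp. upper pseudo-intervals, intervals); a lower (resp. upper) pseudo-interval is a convex union of intervals sharing the same minimum (resp. maximum). A lattice is join-extremal (resp. meet-extremal) if its length (maximum number of elements of a chain minus one) equals its number of join-irreducible (resp. meet-irreducible) elements, and extremal if both hold. An element $a$ is left modular if for all $b<c$, $(b\vee a)\wedge c=b\vee(a\wedge c)$; a lattice is left modular if it has a maximal chain of left modular elements. *)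

(* Defs.v *)
From HB Require Import structures.
From mathcomp Require Import all_boot all_order.
Set Implicit Arguments. Unset Strict Implicit. Unset Printing Implicit Defensive.
Import Order.Theory.
Local Open Scope order_scope.

Section GenericPoset.
Variables (T : finType) (le : rel T).

Definition convex (C : {set T}) : Prop :=
  forall x y z, x \in C -> z \in C -> le x y -> le y z -> y \in C.

Definition itv (a b : T) : {set T} := [set y | le a y && le y b].

(* C is an interval (nonemptiness is required separately) *)
Definition is_interval (C : {set T}) : Prop :=
  exists a b, le a b /\ C = itv a b.

Definition lower_pseudo_interval (C : {set T}) : Prop :=
  convex C /\ exists (m : T) (B : {set T}), C = \bigcup_(b in B) itv m b.

Definition upper_pseudo_interval (C : {set T}) : Prop :=
  convex C /\ exists (M : T) (A : {set T}), C = \bigcup_(a in A) itv a M.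

Definition downset (C : {set T}) : {set T} :=
  [set y | [exists x in C, le y x]].

(* the underlying set of the doubling L[C] inside L x {0<1} *)
Definition doubling_set (C : {set T}) : {set T * bool} :=
  [set p | if p.2 then (p.1 \notin downset C) || (p.1 \in C)
           else p.1 \in downset C].

Definition prod_le (p q : T * bool) : bool := le p.1 q.1 && (p.2 <= q.2)%N.

End GenericPoset.

Definition iso_doubling (S : finType) (leS : rel S)
    (T : finType) (leT : rel T) (C : {set T}) : Prop :=
  exists f : S -> T * bool,
    [/\ injective f,
        forall x, f x \in doubling_set leT C,
        forall p, p \in doubling_set leT C -> exists x, f x = p
      & forall x y, leS x y = prod_le leT (f x) (f y)].

Inductive doubling_closure
    (P : forall T : finType, rel T -> {set T} -> Prop) :
    forall S : finType, rel S -> Prop :=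
| dc_base (S : finType) (leS : rel S) :
    #|S| = 1 -> (forall x, leS x x) -> doubling_closure P leS
| dc_step (S : finType) (leS : rel S) (T : finType) (leT : rel T) (C : {set T}) :
    doubling_closure P leT -> C != set0 -> P T leT C ->
    iso_doubling leS leT C -> doubling_closure P leS.

Definition P_interval (T : finType) (le : rel T) (C : {set T}) : Prop :=
  is_interval le C.
Definition P_lower (T : finType) (le : rel T) (C : {set T}) : Prop :=
  lower_pseudo_interval le C.
Definition P_upper (T : finType) (le : rel T) (C : {set T}) : Prop :=
  upper_pseudo_interval le C.

Section Lattice.
Context {disp : Order.disp_t} {L : finTBLatticeType disp}.

Definition congruence_uniform : Prop :=
  doubling_closure P_interval (<=%O : rel L).
Definition join_congruence_uniform : Prop :=
  doubling_closure P_lower (<=%O : rel L).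
Definition meet_congruence_uniform : Prop :=
  doubling_closure P_upper (<=%O : rel L).

Definition join_irreducible (x : L) : bool :=
  (x != \bot) && [forall a : L, forall b : L, (a `|` b == x) ==> (a == x) || (b == x)].
Definition meet_irreducible (x : L) : bool :=
  (x != \top) && [forall a : L, forall b : L, (a `&` b == x) ==> (a == x) || (b == x)].

Definition is_chain (S : {set L}) : bool :=
  [forall x in S, forall y in S, (x <= y) || (y <= x)].

Definition lattice_length : nat :=
  (\max_(S : {set L} | is_chain S) #|S|)%N.-1.

Definition join_extremal : Prop :=
  lattice_length = #|[set x : L | join_irreducible x]|.
Definition meet_extremal : Prop :=
  lattice_length = #|[set x : L | meet_irreducible x]|.
Definition extremal : Prop := join_extremal /\ meet_extremal.

Definition left_modular_elt (a : L) : Prop :=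
  forall b c : L, b < c -> (b `|` a) `&` c = b `|` (a `&` c).

Definition left_modular : Prop :=
  exists S : {set L}, maxset is_chain S /\ forall a, a \in S -> left_modular_elt a.

End Lattice.

(* Main.v *)
Require Import Defs.
From HB Require Import structures.
From mathcomp Require Import all_boot all_order.
Set Implicit Arguments. Unset Strict Implicit. Unset Printing Implicit Defensive.
Import Order.Theory.

Module LatM.
Local Open Scope order_scope.

Section Lat.
Context {disp : Order.disp_t} {L : finTBLatticeType disp}.
Implicit Types (x y z a b c j s t w : L) (S A : {set L}).

Definition JSD := forall a b c : L, a `|` b = a `|` c -> a `|` (b `&` c) = a `|` b.
Definition MSD := forall a b c : L, a `&` b = a `&` c -> a `&` (b `|` c) = a `&` b.

Definition phi (x : L) := #|[set z : L | z < x]|.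

Lemma phi_lt x y : x < y -> (phi x < phi y)%N.
Proof.
move=> xy; apply: proper_card; apply/properP; split.
  by apply/subsetP => w; rewrite !inE => h; exact: lt_trans h xy.
by exists x; rewrite !inE ?ltxx.
Qed.

Lemma min_elt (P : pred L) z0 : P z0 ->
  exists2 j, P j & forall w, w < j -> ~~ P w.
Proof.
move=> Pz; case: (arg_minnP phi Pz) => j Pj jmin.
exists j => // w wj; apply/negP => Pw.
by have /= := jmin w Pw; rewrite leqNgt phi_lt.
Qed.

Lemma max_elt (P : pred L) z0 : P z0 ->
  exists2 j, P j & forall w, j < w -> ~~ P w.
Proof.
move=> Pz; case: (arg_maxnP phi Pz) => j Pj jmax.
exists j => // w wj; apply/negP => Pw.
by have /= := jmax w Pw; rewrite leqNgt phi_lt.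
Qed.

Lemma chainP S x y : is_chain S -> x \in S -> y \in S -> (x <= y) || (y <= x).
Proof. by move=> /forall_inP /(_ x) H xS yS; move: (H xS) => /forall_inP; apply. Qed.

Lemma chain_min S (A : {set L}) s0 : is_chain S -> A \subset S -> s0 \in A ->
  exists2 s, s \in A & forall s', s' \in A -> s <= s'.
Proof.
move=> cS AS s0A; case: (min_elt (P := fun w => w \in A) s0A) => s sA smin.
exists s => // s' s'A.
have := chainP cS (subsetP AS _ sA) (subsetP AS _ s'A).
case/orP => // /[dup] h; rewrite le_eqVlt => /orP [/eqP -> //|].
by move=> /smin; rewrite s'A.
Qed.

Lemma chain_max S (A : {set L}) s0 : is_chain S -> A \subset S -> s0 \in A ->
  exists2 s, s \in A & forall s', s' \in A -> s' <= s.
Proof.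
move=> cS AS s0A; case: (max_elt (P := fun w => w \in A) s0A) => s sA smax.
exists s => // s' s'A.
have := chainP cS (subsetP AS _ sA) (subsetP AS _ s'A).
case/orP => // /[dup] h; rewrite le_eqVlt => /orP [/eqP -> //|].
by move=> /smax; rewrite s'A.
Qed.

Lemma JI_neq0 j : join_irreducible j -> j != \bot.
Proof. by case/andP. Qed.

Lemma JI_join j a b : join_irreducible j -> a `|` b = j -> a = j \/ b = j.
Proof.
case/andP => _ /forallP /(_ a) /forallP /(_ b) /implyP H abj.
by case/orP: (H (introT eqP abj)) => /eqP; [left|right].
Qed.

Lemma min_JI y z : ~~ (z <= y) -> exists j,
  [/\ join_irreducible j, j <= z, ~~ (j <= y) & forall w, w < j -> w <= y].
Proof.
move=> zy.
case: (min_elt (P := fun w => (w <= z) && ~~ (w <= y)) (z0 := z)); first by rewrite lexx.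
move=> j /andP [jz jy] jmin.
have lowy w : w < j -> w <= y.
  move=> wj; have := jmin w wj; rewrite negb_and negbK => /orP [|//].
  by rewrite (le_trans (ltW wj) jz).
exists j; split => //.
apply/andP; split.
  by apply: contra jy => /eqP ->; rewrite le0x.
apply/forallP => a; apply/forallP => b; apply/implyP => /eqP abj.
apply: contraNT jy; rewrite negb_or => /andP [aj bj].
have aj' : a < j by rewrite lt_neqAle aj -abj leUl.
have bj' : b < j by rewrite lt_neqAle bj -abj leUr.
by rewrite -abj leUx !lowy.
Qed.

Definition JIset := [set x : L | join_irreducible x].

Lemma chain_card S : is_chain S -> (#|S| <= #|JIset|.+1)%N.
Proof.
move=> cS.
pose g (s : L) := #|[set j in JIset | j <= s]|.
have gle s : (g s <= #|JIset|)%N.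
  by apply: subset_leq_card; apply/subsetP => j; rewrite inE => /andP [].
have glt s t : s < t -> (g s < g t)%N.
  move=> st; apply: proper_card; apply/properP; split.
    apply/subsetP => j; rewrite !inE => /andP [-> js].
    by rewrite (le_trans js (ltW st)).
  have : ~~ (t <= s) by rewrite lt_geF.
  case/min_JI => j [jJ jt jns _]; exists j; rewrite !inE ?jJ ?jt //=.
pose g' (s : L) : 'I_(#|JIset|.+1) := inord (g s).
have inj : {in S &, injective g'}.
  move=> s t sS tS /(congr1 val); rewrite /g' /= !inordK ?ltnS ?gle // => e.
  case/orP: (chainP cS sS tS); rewrite le_eqVlt => /orP [/eqP //|/glt];
    by rewrite e ltnn.
rewrite -(card_in_imset inj) -[X in (_ <= X)%N]card_ord.
exact: max_card.
Qed.

Lemma length_le : (@lattice_length _ L <= #|JIset|)%N.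
Proof.
rewrite /lattice_length -subn1 leq_subLR add1n.
by apply/bigmax_leqP => S; exact: chain_card.
Qed.

Lemma length_ge S : is_chain S -> (#|S|.-1 <= @lattice_length _ L)%N.
Proof. by move=> cS; rewrite /lattice_length -!subn1 leq_sub2r //; apply: leq_bigmax_cond. Qed.


Lemma add_chain S w : is_chain S -> (forall s, s \in S -> (s <= w) || (w <= s)) ->
  is_chain (w |: S).
Proof.
move=> cS H; apply/forall_inP => x; rewrite !inE => /orP [/eqP ->|xS];
  apply/forall_inP => y; rewrite !inE => /orP [/eqP ->|yS].
- by rewrite lexx.
- by rewrite orbC H.
- by rewrite H.
- exact: (chainP cS xS yS).
Qed.

Lemma maxchain_add S w : maxset is_chain S ->
  (forall s, s \in S -> (s <= w) || (w <= s)) -> w \in S.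
Proof.
case/maxsetP => cS mx H.
by rewrite -(mx (w |: S) (add_chain cS H) (subsetUr _ _)) setU11.
Qed.

Lemma maxchain_bot S : maxset is_chain S -> \bot \in S.
Proof. by move=> mS; apply: maxchain_add => // s _; rewrite le0x orbT. Qed.

Lemma maxchain_top S : maxset is_chain S -> \top \in S.
Proof. by move=> mS; apply: maxchain_add => // s _; rewrite lex1. Qed.

Lemma pred_ex S s : is_chain S -> \bot \in S -> s \in S -> \bot < s ->
  exists t, [/\ t \in S, t < s & forall r, r \in S -> r < s -> r <= t].
Proof.
move=> cS bS sS bs.
have AS : [set r in S | r < s] \subset S.
  by apply/subsetP => r; rewrite inE => /andP [].
have bA : \bot \in [set r in S | r < s] by rewrite inE bS bs.
have [t] := chain_max cS AS bA.
rewrite inE => /andP [tS ts] H; exists t; split => // r rS rs.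
by apply: H; rewrite inE rS rs.
Qed.

Lemma cover S t s w : maxset is_chain S -> t \in S -> s \in S -> t < s ->
  (forall r, r \in S -> r < s -> r <= t) -> t <= w -> w <= s -> w = t \/ w = s.
Proof.
move=> mS tS sS ts tmax tw ws.
case: (eqVneq w t) => [-> |wt]; first by left.
case: (eqVneq w s) => [-> |wns]; first by right.
have tw' : t < w by rewrite lt_neqAle eq_sym wt tw.
have ws' : w < s by rewrite lt_neqAle wns ws.
have cS : is_chain S by case/maxsetP: mS.
have wS : w \in S.
  apply: (maxchain_add mS) => r rS.
  case/orP: (chainP cS rS sS) => [rs|sr].
    case: (eqVneq r s) => [->|rns]; first by rewrite ws orbT.
    by rewrite (le_trans (tmax r rS _) tw) // lt_neqAle rns rs.
  by rewrite (le_trans ws sr) orbT.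
by have := tmax w wS ws'; rewrite lt_geF.
Qed.

Lemma umin S j : is_chain S -> \top \in S ->
  exists s, [/\ s \in S, j <= s & forall s', s' \in S -> j <= s' -> s <= s'].
Proof.
move=> cS tS.
have AS : [set r in S | j <= r] \subset S.
  by apply/subsetP => r; rewrite inE => /andP [].
have tA : \top \in [set r in S | j <= r] by rewrite inE tS lex1.
have [s] := chain_min cS AS tA.
rewrite inE => /andP [sS js] H; exists s; split => // r rS jr.
by apply: H; rewrite inE rS jr.
Qed.

Lemma JI_pos j s : join_irreducible j -> j <= s -> \bot < s.
Proof.
move=> /JI_neq0 jn js; rewrite lt_neqAle le0x andbT eq_sym.
by apply: contra jn => /eqP sb; rewrite -lex0 -sb.
Qed.

Theorem partA_core : JSD -> @left_modular _ L -> @join_extremal _ L.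
Proof.
move=> jsd [S [mS lmS]].
have cS : is_chain S by case/maxsetP: mS.
have bS := maxchain_bot mS; have tS := maxchain_top mS.
have [u Hu] := fin_all_exists (fun j => umin j cS tS).
have uS j : u j \in S by case: (Hu j).
have key k s t : join_irreducible k -> u k = s -> t \in S -> t < s ->
    (forall r, r \in S -> r < s -> r <= t) ->
    [/\ ~~ (k <= t), t `|` k = s & forall m, m < k -> m <= t].
  move=> kJ uk tS' ts tmax; case: (Hu k); rewrite uk => sS ks kmin.
  have nkt : ~~ (k <= t).
    by apply/negP => kt; have := kmin t tS' kt; rewrite lt_geF.
  split => //.
    have tks : t `|` k <= s by rewrite leUx ltW.
    have [] := cover mS tS' sS ts tmax (leUl t k) tks => // e.
    by move: nkt; rewrite -e leUr.
  move=> m mk; have := lmS t tS' m k mk.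
  have mks : m <= s by rewrite (le_trans (ltW mk) ks).
  have mts : m `|` t <= s by rewrite leUx mks ltW.
  have [e|e] := cover mS tS' sS ts tmax (leUr t m) mts.
    by move=> _; rewrite -e leUl.
  rewrite e (meet_r ks) => /esym ek.
  have [|] := JI_join kJ ek; first by move=> mk'; move: mk; rewrite mk' ltxx.
  by move=> tk; move: nkt; rewrite -tk leIl.
have uinj : {in JIset &, injective u}.
  move=> j j'; rewrite !inE => jJ j'J e.
  case: (Hu j) => sS js _.
  have bs := JI_pos jJ js.
  have [t [tS' ts tmax]] := pred_ex cS bS sS bs.
  have [njt tj jlow] := key j _ t jJ erefl tS' ts tmax.
  have [nj't tj' j'low] := key j' _ t j'J (esym e) tS' ts tmax.
  case: (eqVneq j j') => // jj'; exfalso.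
  have mt : j `&` j' <= t.
    case: (eqVneq (j `&` j') j) => [h|h].
      have jlj' : j < j' by rewrite lt_neqAle jj' -h leIr.
      by move: njt; rewrite (j'low _ jlj').
    by apply: jlow; rewrite lt_neqAle h leIl.
  have := jsd t j j'; rewrite tj tj' => /(_ erefl); rewrite (join_l mt) => ets.
  by move: ts; rewrite ets ltxx.
have usub : u @: JIset \subset S :\ \bot.
  apply/subsetP => s /imsetP [j]; rewrite inE => jJ ->.
  rewrite !inE uS andbT; case: (Hu j) => _ js _.
  by have := JI_pos jJ js; rewrite lt_neqAle eq_sym => /andP [].
rewrite /join_extremal; change (@lattice_length _ L = #|JIset|); apply/eqP; rewrite eqn_leq length_le /=.
apply: leq_trans (length_ge cS).
rewrite -(card_in_imset uinj) (cardsD1 \bot S) bS add1n /=.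
exact: subset_leq_card.
Qed.


Theorem conv_core : MSD -> @join_extremal _ L -> @left_modular _ L.
Proof.
move=> msd ext.
have pos : (0 < #|[pred X : {set L} | is_chain X]|)%N.
  apply/card_gt0P; exists set0; rewrite inE /=.
  by apply/forall_inP => x; rewrite inE.
have [S cS Smax] := eq_bigmax_cond (fun X : {set L} => #|X|) pos.
have {}cS : is_chain S by move: cS; rewrite inE.
have Smax' : (\max_(X | @is_chain _ L X) #|X|)%N = #|S|.
  by rewrite -Smax; apply: eq_bigl => X; rewrite inE.
have mS : maxset is_chain S.
  apply/maxsetP; split => // B cB SB; apply/eqP; rewrite eq_sym eqEcard SB /=.
  by rewrite -Smax' (@leq_bigmax_cond _ (@is_chain _ L) (fun X : {set L} => #|X|) B cB).
have lenS : @lattice_length _ L = #|S|.-1 by rewrite /lattice_length Smax'.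
have bS := maxchain_bot mS; have tS := maxchain_top mS.
have [u Hu] := fin_all_exists (fun j => umin j cS tS).
have uS j : u j \in S by case: (Hu j).
have u_pred j' s t : s \in S -> t \in S -> t < s ->
    (forall r, r \in S -> r < s -> r <= t) -> j' <= s -> ~~ (j' <= t) -> u j' = s.
  move=> sS tS' ts tmax j's j't; case: (Hu j') => uj'S j'u umn.
  have us : u j' <= s := umn s sS j's.
  case: (eqVneq (u j') s) => // ns; exfalso.
  have : u j' <= t by apply: tmax; rewrite // lt_neqAle ns us.
  by move=> ut; move: j't; rewrite (le_trans j'u ut).
have uim : u @: JIset = S :\ \bot.
  apply/eqP; rewrite eqEsubset; apply/andP; split.
    apply/subsetP => s /imsetP [j]; rewrite inE => jJ ->.
    rewrite !inE uS andbT; case: (Hu j) => _ js _.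
    by have := JI_pos jJ js; rewrite lt_neqAle eq_sym => /andP [].
  apply/subsetP => s; rewrite !inE => /andP [sb sS].
  have bs : \bot < s by rewrite lt_neqAle eq_sym sb le0x.
  have [t [tS' ts tmax]] := pred_ex cS bS sS bs.
  have [j' [j'J j's j't _]] := min_JI (y := t) (z := s) (negbT (lt_geF ts)).
  apply/imsetP; exists j'; first by rewrite inE.
  by rewrite (u_pred j' s t).
have uinj : {in JIset &, injective u}.
  apply/imset_injP; rewrite uim; move: ext; rewrite /join_extremal lenS.
  by rewrite (cardsD1 \bot S) bS add1n /= => ->.
exists S; split => // x xS b c bc.
set y := b `|` (x `&` c); set z := (b `|` x) `&` c.
have yz : y <= z.
  rewrite leUx !lexI leUl ltW //= leIr andbT.
  by rewrite (le_trans (leIl _ _) (leUr _ _)).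
case: (boolP (z <= y)) => [zy|nzy]; first by apply/le_anti; rewrite zy yz.
exfalso.
have [j [jJ jz jy jlow]] := min_JI nzy.
case: (Hu j) => sS js smin.
set s := u j in sS js smin.
have bs := JI_pos jJ js.
have [t [tS' ts tmax]] := pred_ex cS bS sS bs.
have xzy : x `&` z <= y.
  apply: le_trans (leUr _ _); rewrite lexI leIl /=.
  by rewrite /z meetA leIr.
case: (boolP (s <= x)) => [sx|nsx].
  by move: jy; rewrite (le_trans _ xzy) // lexI jz (le_trans js sx).
have xt : x <= t.
  apply: tmax => //; case/orP: (chainP cS xS sS) => [xs|sx]; last by rewrite sx in nsx.
  rewrite lt_neqAle xs andbT; apply: contra nsx => /eqP ->; exact: lexx.
have [j' [j'J j's j't j'low]] := min_JI (y := t) (z := s) (negbT (lt_geF ts)).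
have ej : j' = j.
  apply: uinj; rewrite ?inE //.
  by rewrite (u_pred j' s t).
rewrite ej in j't j'low.
have jyt : j `&` y = j `&` t.
  apply/le_anti; rewrite !lexI !leIl /=.
  apply/andP; split.
    apply: j'low; rewrite lt_neqAle leIl andbT.
    by apply: contra jy => /eqP <-; rewrite leIr.
  apply: jlow; rewrite lt_neqAle leIl andbT.
  by apply: contra j't => /eqP <-; rewrite leIr.
have := msd j y t jyt.
have jyt' : j <= y `|` t.
  apply: (le_trans jz); apply: (le_trans (leIl _ _)).
  by rewrite leUx (le_trans (leUl b (x `&` c)) (leUl y t)) (le_trans xt (leUr t y)).
rewrite (meet_l jyt') => ejy.
by move: jy; rewrite [X in X <= y]ejy leIr.
Qed.

End Lat.

Section Dual.
Context {disp : Order.disp_t} {L : finTBLatticeType disp}.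

Lemma dual_JSD : @MSD _ L -> @JSD _ L^d.
Proof. move=> h a b c; exact: (h a b c). Qed.

Lemma dual_chain (S : {set L}) : @is_chain _ L^d S = @is_chain _ L S.
Proof.
apply/forall_inP/forall_inP => H x xS; apply/forall_inP => y yS;
  by move: (H x xS) => /forall_inP /(_ y yS); rewrite orbC.
Qed.

Lemma dual_length : @lattice_length _ L^d = @lattice_length _ L.
Proof. by rewrite /lattice_length; congr (_.-1); apply: eq_bigl => S; rewrite dual_chain. Qed.

Lemma dual_ext : @join_extremal _ L^d -> @meet_extremal _ L.
Proof. by rewrite /join_extremal /meet_extremal dual_length. Qed.

Lemma lm_flip (a b c : L) : (c `|` a) `&` b = c `|` (a `&` b) ->
  (b `&` a) `|` c = b `&` (a `|` c).
Proof. by move=> h; rewrite [in RHS]meetC (joinC a c) h joinC meetC. Qed.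

Lemma dual_lm : @left_modular _ L -> @left_modular _ L^d.
Proof.
case=> S [mS lmS]; exists S; split.
  by rewrite (maxset_eq S dual_chain).
move=> a aS b c cb.
have := lmS a aS c b cb.
rewrite !joinEdual !meetEdual.
exact: lm_flip.
Qed.

End Dual.

End LatM.
Import LatM.

Module DblM.

Section Rel.
Variables (X : finType) (D : pred X) (le : rel X).
Definition lubR x y j := [/\ D j, le x j, le y j & forall u, D u -> le x u -> le y u -> le j u].
Definition glbR x y m := [/\ D m, le m x, le m y & forall u, D u -> le u x -> le u y -> le u m].
Definition porderR := [/\ forall x, D x -> le x x,
  forall x y, D x -> D y -> le x y -> le y x -> x = y &
  forall x y z, D x -> D y -> D z -> le x y -> le y z -> le x z].
Definition latticeR := (forall x y, D x -> D y -> exists j, lubR x y j) /\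
                       (forall x y, D x -> D y -> exists m, glbR x y m).
Definition jsdR := forall a b c j m, D a -> D b -> D c ->
  lubR a b j -> lubR a c j -> glbR b c m -> lubR a m j.
Definition msdR := forall a b c j m, D a -> D b -> D c ->
  glbR a b m -> glbR a c m -> lubR b c j -> glbR a j m.

Lemma lub_uniq x y j1 j2 : porderR -> lubR x y j1 -> lubR x y j2 -> j1 = j2.
Proof.
case=> _ anti _ [D1 x1 y1 m1] [D2 x2 y2 m2].
by apply: anti => //; [apply: m1 | apply: m2].
Qed.

Lemma glb_uniq x y j1 j2 : porderR -> glbR x y j1 -> glbR x y j2 -> j1 = j2.
Proof.
case=> _ anti _ [D1 x1 y1 m1] [D2 x2 y2 m2].
by apply: anti => //; [apply: m2 | apply: m1].
Qed.
End Rel.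

Section Iso.
Variables (Y X : finType) (D : pred X) (leX : rel X) (leY : rel Y) (f : Y -> X).
Hypotheses (finj : injective f) (fD : forall y, D (f y))
  (fsurj : forall x, D x -> exists y, f y = x)
  (fle : forall a b, leY a b = leX (f a) (f b)).

Lemma lub_tr a b j : lubR predT leY a b j <-> lubR D leX (f a) (f b) (f j).
Proof.
split.
  case=> _ aj bj H; split => //; rewrite -?fle //.
  by move=> u /fsurj [u' <-]; rewrite -!fle; apply: H.
case=> _ aj bj H; split => //; rewrite ?fle //.
by move=> u _; rewrite !fle; apply: H.
Qed.

Lemma glb_tr a b j : glbR predT leY a b j <-> glbR D leX (f a) (f b) (f j).
Proof.
split.
  case=> _ aj bj H; split => //; rewrite -?fle //.
  by move=> u /fsurj [u' <-]; rewrite -!fle; apply: H.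
case=> _ aj bj H; split => //; rewrite ?fle //.
by move=> u _; rewrite !fle; apply: H.
Qed.

Lemma porder_tr : porderR D leX -> porderR predT leY.
Proof.
case=> r an tr; split.
- by move=> x _; rewrite fle r.
- by move=> x y _ _; rewrite !fle => h1 h2; apply: finj; apply: an.
- by move=> x y z _ _ _; rewrite !fle; apply: tr.
Qed.

Lemma lattice_tr : latticeR D leX -> latticeR predT leY.
Proof.
case=> hl hg; split => x y _ _.
  have [j' Hj] := hl _ _ (fD x) (fD y).
  have [j ej] := fsurj (let: And4 h _ _ _ := Hj in h).
  by exists j; apply/lub_tr; rewrite ej.
have [j' Hj] := hg _ _ (fD x) (fD y).
have [j ej] := fsurj (let: And4 h _ _ _ := Hj in h).
by exists j; apply/glb_tr; rewrite ej.
Qed.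

Lemma jsd_tr : jsdR D leX -> jsdR predT leY.
Proof.
move=> H a b c j m _ _ _ /lub_tr h1 /lub_tr h2 /glb_tr h3; apply/lub_tr.
exact: H h1 h2 h3.
Qed.

Lemma msd_tr : msdR D leX -> msdR predT leY.
Proof.
move=> H a b c j m _ _ _ /glb_tr h1 /glb_tr h2 /lub_tr h3; apply/glb_tr.
exact: H h1 h2 h3.
Qed.
End Iso.

Section Doubling.
Variables (T : finType) (le : rel T) (C : {set T}).
Hypotheses (po : porderR predT le) (convC : convex le C).
Let I := downset le C.
Let DD := fun p : T * bool => p \in doubling_set le C.
Let ple := prod_le le.

Let refl x : le x x. Proof. by case: po => r _ _; apply: r. Qed.
Let trans x y z : le x y -> le y z -> le x z.
Proof. by case: po => _ _ t; apply: t. Qed.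
Let anti x y : le x y -> le y x -> x = y.
Proof. by case: po => _ a _; apply: a. Qed.

Lemma DDE x b : DD (x, b) = if b then (x \notin I) || (x \in C) else x \in I.
Proof. by rewrite /DD /doubling_set inE. Qed.

Lemma I_down x y : le x y -> y \in I -> x \in I.
Proof.
move=> xy; rewrite /I /downset !inE => /existsP [c /andP [cC yc]].
by apply/existsP; exists c; rewrite cC (trans xy yc).
Qed.

Lemma C_I x : x \in C -> x \in I.
Proof. by move=> xC; rewrite /I /downset inE; apply/existsP; exists x; rewrite xC refl. Qed.

Lemma I_C x p : x \in C -> le x p -> p \in I -> p \in C.
Proof.
move=> xC xp; rewrite /I /downset inE => /existsP [c /andP [cC pc]].
exact: convC xC cC xp pc.
Qed.

Lemma dbl_porder : porderR DD ple.
Proof.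
split.
- by case=> x a _; rewrite /ple /prod_le refl leqnn.
- case=> x a [y b] _ _; rewrite /ple /prod_le /= => /andP [xy ab] /andP [yx ba].
  by rewrite (anti xy yx); congr pair; move: ab ba; case: a; case: b.
- case=> x a [y b] [z c] _ _ _; rewrite /ple /prod_le /=.
  by move=> /andP [xy ab] /andP [yz bc]; rewrite (trans xy yz) (leq_trans ab bc).
Qed.

Definition lubflag (a b : bool) p := [|| a, b | p \notin I].
Definition glbflag (a b : bool) q := [&& a, b & (q \notin I) || (q \in C)].

Lemma dbl_lub x y a b p : lubR predT le x y p -> DD (x, a) -> DD (y, b) ->
  lubR DD ple (x, a) (y, b) (p, lubflag a b p).
Proof.
case=> _ xp yp pmin Dx Dy; rewrite /lubflag; split.
- rewrite DDE; case: (boolP (p \in I)) => pI; rewrite ?orbT //= orbF.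
  have toC w : DD (w, true) -> le w p -> p \in C.
    move=> + wp; rewrite DDE => /orP [wI|wC]; last exact: I_C wC wp pI.
    by rewrite (I_down wp pI) in wI.
  case: a Dx => /= Dx; first exact: toC Dx xp.
  by case: b Dy => //= Dy; exact: toC Dy yp.
- by rewrite /ple /prod_le /= xp; case: a Dx; case: b Dy.
- by rewrite /ple /prod_le /= yp; case: a Dx; case: b Dy.
- case=> r h Dr; rewrite /ple /prod_le /= => /andP [xr ar] /andP [yr br].
  rewrite (pmin r) //=; case: h Dr ar br => [_ _ _|]; first exact: leq_b1.
  rewrite DDE => rI; case: a Dx; case: b Dy => //= _ _ _ _.
  by rewrite (I_down (pmin r isT xr yr) rI).
Qed.

Lemma dbl_glb x y a b q : glbR predT le x y q -> DD (x, a) -> DD (y, b) ->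
  glbR DD ple (x, a) (y, b) (q, glbflag a b q).
Proof.
case=> _ qx qy qmax Dx Dy; rewrite /glbflag; split.
- rewrite DDE; case: a Dx => /=; last by rewrite DDE => /(I_down qx).
  case: b Dy => /=; last by rewrite DDE => /(I_down qy).
  by move=> _ _; case: ifP => // /negbT; rewrite negb_or negbK => /andP [].
- by rewrite /ple /prod_le /= qx; case: a Dx; case: b Dy => //= *; exact: leq_b1.
- by rewrite /ple /prod_le /= qy; case: a Dx; case: b Dy => //= *; exact: leq_b1.
- case=> r h Dr; rewrite /ple /prod_le /= => /andP [rx ra] /andP [ry rb].
  rewrite (qmax r) //=; case: h Dr ra rb => //=; rewrite DDE.
  case: a Dx; case: b Dy => //= _ _ Dr _ _.
  case: (boolP (q \in I)) => //= qI.
  have rI := I_down (qmax r isT rx ry) qI.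
  rewrite rI /= in Dr.
  by rewrite (I_C Dr (qmax r isT rx ry) qI).
Qed.

Lemma dbl_lattice : latticeR predT le -> latticeR DD ple.
Proof.
case=> hl hg; split.
  case=> x a [y b] Dx Dy; have [p Hp] := hl x y isT isT.
  by exists (p, lubflag a b p); apply: dbl_lub.
case=> x a [y b] Dx Dy; have [q Hq] := hg x y isT isT.
by exists (q, glbflag a b q); apply: dbl_glb.
Qed.

Lemma dbl_lub_inv x y a b j : latticeR predT le -> DD (x, a) -> DD (y, b) ->
  lubR DD ple (x, a) (y, b) j -> lubR predT le x y j.1 /\ j = (j.1, lubflag a b j.1).
Proof.
case=> hl _ Dx Dy Hj; have [p Hp] := hl x y isT isT.
have := lub_uniq dbl_porder Hj (dbl_lub Hp Dx Dy) => ->; by split.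
Qed.

Lemma dbl_glb_inv x y a b j : latticeR predT le -> DD (x, a) -> DD (y, b) ->
  glbR DD ple (x, a) (y, b) j -> glbR predT le x y j.1 /\ j = (j.1, glbflag a b j.1).
Proof.
case=> _ hg Dx Dy Hj; have [p Hp] := hg x y isT isT.
have := glb_uniq dbl_porder Hj (dbl_glb Hp Dx Dy) => ->; by split.
Qed.

Lemma dbl_jsd (m : T) (B : {set T}) : C = \bigcup_(b in B) itv le m b ->
  latticeR predT le -> jsdR predT le -> jsdR DD ple.
Proof.
move=> eC lat jsd [x a] [y b] [z c] j mm Dx Dy Dz H1 H2 H3.
have [l1 ej] := dbl_lub_inv lat Dx Dy H1.
have [l2 ej2] := dbl_lub_inv lat Dx Dz H2.
have [g1 emm] := dbl_glb_inv lat Dy Dz H3.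
case: j ej ej2 H1 H2 l1 l2 => p e /= [->] [] eb _ _ l1 l2.
case: mm emm H3 g1 => q g /= [->] H3 g1.
have Dq : DD (q, glbflag b c q) by case: H3.
have lq := jsd x y z p q isT isT isT l1 l2 g1.
suff -> : lubflag a b p = lubflag a (glbflag b c q) p by apply: dbl_lub.
rewrite /lubflag /glbflag in eb *.
case: (boolP (p \in I)) => pI /=; last by rewrite !orbT.
rewrite pI /= !orbF in eb *.
clear H3 Dq.
move: Dx Dy Dz eb; case: a => //= Dx; case: b => /= Dy; case: c => /= Dz eb //.
apply/esym.
have yC : y \in C.
  by move: Dy; rewrite DDE (I_down (let: And4 _ _ h _ := l1 in h) pI).
have zC : z \in C.
  by move: Dz; rewrite DDE (I_down (let: And4 _ _ h _ := l2 in h) pI).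
apply/orP; right.
case: g1 => _ qy qz qmax.
have yC' := yC; rewrite eC in yC'.
have zC' := zC; rewrite eC in zC'.
case/bigcupP: yC' => b1 b1B; rewrite inE => /andP [my yb1].
case/bigcupP: zC' => b2 _; rewrite inE => /andP [mz _].
have mC : m \in C.
  by rewrite eC; apply/bigcupP; exists b1 => //; rewrite inE refl (trans my yb1).
exact: convC mC yC (qmax m isT my mz) qy.
Qed.

Lemma dbl_msd (M : T) (A : {set T}) : C = \bigcup_(a in A) itv le a M ->
  latticeR predT le -> msdR predT le -> msdR DD ple.
Proof.
move=> eC lat msd [x a] [y b] [z c] j mm Dx Dy Dz H1 H2 H3.
have [g1 emm] := dbl_glb_inv lat Dx Dy H1.
have [g2 emm2] := dbl_glb_inv lat Dx Dz H2.
have [l1 ej] := dbl_lub_inv lat Dy Dz H3.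
case: mm emm emm2 H1 H2 g1 g2 => q g /= [->] [] eb _ _ g1 g2.
case: j ej H3 l1 => p e /= [->] H3 l1.
have Dp : DD (p, lubflag b c p) by case: H3.
have gq := msd x y z p q isT isT isT g1 g2 l1.
suff -> : glbflag a b q = glbflag a (lubflag b c p) q by apply: dbl_glb.
rewrite /glbflag /lubflag in eb *.
case X : ((q \notin I) || (q \in C)) in eb *; last by rewrite !andbF.
rewrite !andbT in eb *.
clear H3 Dp.
move: Dx Dy Dz eb; case: a => //= Dx; case: b => /= Dy; case: c => /= Dz eb //.
have MC : forall w, w \in I -> le w M /\ M \in C.
  move=> w; rewrite /I /downset inE => /existsP [c1 /andP [c1C wc1]].
  move: c1C; rewrite {1}eC => /bigcupP [a1 a1A]; rewrite inE => /andP [a1c1 c1M].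
  split; first exact: trans wc1 c1M.
  rewrite eC; apply/bigcupP; exists a1 => //; rewrite inE refl andbT.
  exact: trans a1c1 c1M.
move: Dy Dz; rewrite !DDE => yI zI.
have [yM MCC] := MC y yI; have [zM _] := MC z zI.
case: l1 => _ _ _ pmin.
by apply/esym/negbF; apply: I_down (pmin M isT yM zM) (C_I MCC).
Qed.

End Doubling.

End DblM.
Import DblM.

Lemma base_inv (S : finType) (leS : rel S) : #|S| = 1 -> (forall x, leS x x) ->
  [/\ porderR predT leS, latticeR predT leS, jsdR predT leS & msdR predT leS].
Proof.
move=> c1 r.
have E : forall x y : S, x = y.
  have /fintype_le1P h : (#|S| <= 1)%N by rewrite c1.
  by move=> x y; rewrite (h x y).
have lubj x y j : lubR predT leS x y j.
  by rewrite (E x j) (E y j); split => // u _ h _.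
have glbj x y j : glbR predT leS x y j.
  by rewrite (E x j) (E y j); split => // u _ h _.
have po : porderR predT leS.
  split.
  - by move=> x _; exact: r.
  - by move=> x y _ _ _ _; exact: E.
  - by move=> x y z _ _ _ _ _; rewrite (E x z).
have lat : latticeR predT leS by split => x y _ _; exists x.
by split => //; move=> *; first [apply: lubj | apply: glbj].
Qed.

Lemma convex_itv (T : finType) (le : rel T) a b :
  porderR predT le -> convex le (itv le a b).
Proof.
case=> _ _ tr x y z; rewrite !inE => /andP [ax _] /andP [_ zb] xy yz.
by rewrite (tr a x y) // (tr y z b).
Qed.

Lemma closure_lower (S : finType) (leS : rel S) :
  doubling_closure P_lower leS ->
  [/\ porderR predT leS, latticeR predT leS & jsdR predT leS].
Proof.
elim => [S0 le0 c r | S0 le0 T leT C _ [po lat js] Cn [cv [m [B eC]]] [f [fi fD fs fle]]].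
  by case: (base_inv c r).
have fD' : forall y, (fun p => p \in doubling_set leT C) (f y) by [].
split.
- exact: (porder_tr fi fD' fle (dbl_porder C po)).
- exact: (lattice_tr fD' fs fle (dbl_lattice po cv lat)).
- exact: (jsd_tr fD' fs fle (dbl_jsd po cv eC lat js)).
Qed.

Lemma closure_upper (S : finType) (leS : rel S) :
  doubling_closure P_upper leS ->
  [/\ porderR predT leS, latticeR predT leS & msdR predT leS].
Proof.
elim => [S0 le0 c r | S0 le0 T leT C _ [po lat js] Cn [cv [m [B eC]]] [f [fi fD fs fle]]].
  by case: (base_inv c r).
have fD' : forall y, (fun p => p \in doubling_set leT C) (f y) by [].
split.
- exact: (porder_tr fi fD' fle (dbl_porder C po)).
- exact: (lattice_tr fD' fs fle (dbl_lattice po cv lat)).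
- exact: (msd_tr fD' fs fle (dbl_msd po cv eC lat js)).
Qed.

Lemma closure_interval (S : finType) (leS : rel S) :
  doubling_closure P_interval leS ->
  [/\ porderR predT leS, latticeR predT leS, jsdR predT leS & msdR predT leS].
Proof.
elim => [S0 le0 c r | S0 le0 T leT C _ [po lat js ms] Cn [a [b [ab eC]]] [f [fi fD fs fle]]].
  by case: (base_inv c r).
have fD' : forall y, (fun p => p \in doubling_set leT C) (f y) by [].
have cv : convex leT C by rewrite eC; exact: convex_itv.
have eCl : C = \bigcup_(b0 in [set b]) itv leT a b0 by rewrite big_set1.
have eCu : C = \bigcup_(a0 in [set a]) itv leT a0 b by rewrite big_set1.
split.
- exact: (porder_tr fi fD' fle (dbl_porder C po)).
- exact: (lattice_tr fD' fs fle (dbl_lattice po cv lat)).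
- exact: (jsd_tr fD' fs fle (dbl_jsd po cv eCl lat js)).
- exact: (msd_tr fD' fs fle (dbl_msd po cv eCu lat ms)).
Qed.

Section ToL.
Local Open Scope order_scope.
Context {disp : Order.disp_t} {L : finTBLatticeType disp}.

Lemma lubL (a b : L) : lubR predT (<=%O : rel L) a b (a `|` b).
Proof. by split => //=; [exact: leUl | exact: leUr | move=> u _ h1 h2; rewrite leUx h1 h2]. Qed.

Lemma glbL (a b : L) : glbR predT (<=%O : rel L) a b (a `&` b).
Proof. by split => //=; [exact: leIl | exact: leIr | move=> u _ h1 h2; rewrite lexI h1 h2]. Qed.

Lemma poL : porderR predT (<=%O : rel L).
Proof.
split => //= x y.
- by move=> _ _ h1 h2; apply/le_anti; rewrite h1 h2.
- by move=> z _ _ _; apply: le_trans.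
Qed.

Lemma jsdR_JSD : jsdR predT (<=%O : rel L) -> @JSD _ L.
Proof.
move=> h a b c e.
have l2 : lubR predT (<=%O : rel L) a c (a `|` b) by rewrite e; exact: lubL.
have := h a b c _ _ isT isT isT (lubL a b) l2 (glbL b c).
by move=> l; apply: (lub_uniq poL (lubL a (b `&` c)) l).
Qed.

Lemma msdR_MSD : msdR predT (<=%O : rel L) -> @MSD _ L.
Proof.
move=> h a b c e.
have g2 : glbR predT (<=%O : rel L) a c (a `&` b) by rewrite e; exact: glbL.
have := h a b c _ _ isT isT isT (glbL a b) g2 (lubL b c).
by move=> g; apply: (glb_uniq poL (glbL a (b `|` c)) g).
Qed.
End ToL.

Theorem corollary3p22 (d : Order.disp_t) (L : finTBLatticeType d) :
  (@join_congruence_uniform d L -> @left_modular d L -> @join_extremal d L) /\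
  (@meet_congruence_uniform d L -> @left_modular d L -> @meet_extremal d L) /\
  (@congruence_uniform d L -> (@extremal d L <-> @left_modular d L)).
Proof.
split; [|split].
- move=> /closure_lower [_ _ /jsdR_JSD js] lm; exact: partA_core.
- move=> /closure_upper [_ _ /msdR_MSD ms] lm.
  apply: dual_ext; apply: (@partA_core _ L^d); [exact: dual_JSD | exact: dual_lm].
- move=> /closure_interval [_ _ /jsdR_JSD js /msdR_MSD ms]; split.
    by case=> je _; exact: conv_core.
  move=> lm; split; first exact: partA_core.
  apply: dual_ext; apply: (@partA_core _ L^d); [exact: dual_JSD | exact: dual_lm].
Qed.
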